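(* Let $k\in I$ with $a_{kk}=0$ and $p(k)=1$. Define $r_k(\alpha_k)=-\alpha_k$; for $i\ne k$, $r_k(\alpha_i)=\alpha_i$ if $a_{ik}=a_{ki}=0$ and $r_k(\alpha_i)=\alpha_i+\alpha_k$ otherwise. Define $X'_k=Y_k$, $Y'_k=X_k$; for $i\neq k$ with $a_{ik}=a_{ki}=0$ put $X'_i=X_i$, $Y'_i=Y_i$; for $i\neq k$ with $a_{ik}\ne0$ or $a_{ki}\neq0$ put $X'_i=[X_i,X_k]$, $Y'_i=[Y_i,Y_k]$; and $h'_i=[X'_i,Y'_i]$. Then $r_k(\alpha_1),\dots,r_k(\alpha_n)$ are linearly independent, and for all $h\in\mathfrak h$ and $i,j\in I$: $[h,X'_i]=r_k(\alpha_i)(h)X'_i$, $[h,Y'_i]=-r_k(\alpha_i)(h)Y'_i$, $[X'_i,Y'_j]=\delta_{ij}h'_i$. Moreover, if $\alpha_k$ is regular (i.e. for every $j\neq k$, $a_{kj}=0$ implies $a_{jk}=0$), then $\mathfrak h$ together with $X'_1,\dots,X'_n,Y'_1,\dots,Y'_n$ generate $\mathfrak g(A)$.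
   Context: Let $I=\{1,\dots,n\}$, let $A=(a_{ij})_{i,j\in I}$ be a complex $n\times n$ matrix and $p:I\to\mathbb Z_2$ a parity function. Fix a complex vector space $\mathfrak h$ of dimension $n+\operatorname{corank}(A)$, linearly independent $\alpha_1,\dots,\alpha_n\in\mathfrak h^*$ and $h_1,\dots,h_n\in\mathfrak h$ with $\alpha_j(h_i)=a_{ij}$. Let $\bar{\mathfrak g}(A)$ be the Lie superalgebra generated by $\mathfrak h$ (even, abelian) and elements $X_i,Y_i$ ($i\in I$) of parity $p(i)$ subject to $[h,X_i]=\alpha_i(h)X_i$, $[h,Y_i]=-\alpha_i(h)Y_i$, $[X_i,Y_j]=\delta_{ij}h_i$. The contragredient Lie superalgebra $\mathfrak g(A)$ is the quotient of $\bar{\mathfrak g}(A)$ by the unique maximal ideal meeting $\mathfrak h$ trivially; we keep writing $X_i,Y_i,h_i$ for the images. *)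

(* Defs.v *)
From HB Require Import structures.
From mathcomp Require Import all_boot all_order all_algebra.
Set Implicit Arguments. Unset Strict Implicit. Unset Printing Implicit Defensive.
Import GRing.Theory.
Local Open Scope ring_scope.

Definition lin_subspace (F : fieldType) (V : lmodType F) (W : V -> Prop) : Prop :=
  W 0 /\ (forall (a : F) x y, W x -> W y -> W (a *: x + y)).

(* Lie superalgebra structure on V: bracket [br] and parity predicate
   [par b] (par false = even part V_0, par true = odd part V_1). *)
Definition is_lie_superalgebra (F : fieldType) (V : lmodType F)
    (br : V -> V -> V) (par : bool -> V -> Prop) : Prop :=
  (forall (a : F) x y z, br (a *: x + y) z = a *: br x z + br y z) /\
  (forall (a : F) x y z, br z (a *: x + y) = a *: br z x + br z y) /\
  (forall b, lin_subspace (par b)) /\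
  (forall v, exists v0 v1, par false v0 /\ par true v1 /\ v = v0 + v1) /\
  (forall v, par false v -> par true v -> v = 0) /\
  (forall a b x y, par a x -> par b y -> par (addb a b) (br x y)) /\
  (forall a b x y, par a x -> par b y ->
     br x y = - (((-1 : F) ^+ (a && b)) *: br y x)) /\
  (forall a b x y z, par a x -> par b y ->
     br x (br y z) = br (br x y) z + ((-1 : F) ^+ (a && b)) *: br y (br x z)).

(* An ideal of the Lie superalgebra (bracket on either side, by super
   antisymmetry it suffices to close under left brackets). *)
Definition is_ideal (F : fieldType) (V : lmodType F) (br : V -> V -> V)
    (I : V -> Prop) : Prop :=
  lin_subspace I /\ (forall x v, I v -> I (br x v)).

Definition generated_by (F : fieldType) (V : lmodType F) (br : V -> V -> V)
    (S : V -> Prop) (v : V) : Prop :=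
  forall W : V -> Prop, lin_subspace W ->
    (forall x y, W x -> W y -> W (br x y)) ->
    (forall s, S s -> W s) -> W v.

(* Pairing of h = 'rV_m with h^* = 'cV_m. *)
Definition ev (F : fieldType) (m : nat) (u : 'rV[F]_m) (f : 'cV[F]_m) : F :=
  (u *m f) 0 0.

(* (V, br, par, hmap, X, Y) is the contragredient Lie superalgebra g(A)
   for the realization (h = 'rV_m, alpha, hh) and parity p:
   h embeds (even, abelian), X_i, Y_i of parity p i satisfy the defining
   relations, g is generated by h, X_i, Y_i, and g has no nonzero ideal
   meeting h trivially (so g is the quotient of \bar g(A) by the maximal
   such ideal). *)
Definition is_contragredient (F : fieldType) (n : nat) (A : 'M[F]_n)
    (p : 'I_n -> bool) (m : nat) (alpha : 'I_n -> 'cV[F]_m)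
    (hh : 'I_n -> 'rV[F]_m) (V : lmodType F) (br : V -> V -> V)
    (par : bool -> V -> Prop) (hmap : 'rV[F]_m -> V) (X Y : 'I_n -> V) : Prop :=
  m = (n + (n - \rank A))%N /\
  free [seq alpha i | i <- enum 'I_n] /\
  (forall i j, ev (hh i) (alpha j) = A i j) /\
  is_lie_superalgebra br par /\
  (forall (a : F) u w, hmap (a *: u + w) = a *: hmap u + hmap w) /\
  injective hmap /\
  (forall u, par false (hmap u)) /\
  (forall u w, br (hmap u) (hmap w) = 0) /\
  (forall i, par (p i) (X i) /\ par (p i) (Y i)) /\
  (forall u i, br (hmap u) (X i) = ev u (alpha i) *: X i) /\
  (forall u i, br (hmap u) (Y i) = - (ev u (alpha i) *: Y i)) /\
  (forall i j, br (X i) (Y j) = if i == j then hmap (hh i) else 0) /\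
  (forall v, generated_by br
     (fun w => (exists u, w = hmap u) \/ (exists i, w = X i) \/ (exists i, w = Y i)) v) /\
  (forall I, is_ideal br I -> (forall u, I (hmap u) -> hmap u = 0) ->
     forall v, I v -> v = 0).

Definition rk (F : fieldType) (n m : nat) (A : 'M[F]_n)
    (alpha : 'I_n -> 'cV[F]_m) (k i : 'I_n) : 'cV[F]_m :=
  if i == k then - alpha k
  else if (A i k == 0) && (A k i == 0) then alpha i else alpha i + alpha k.

(* New generators X'_i (resp. Y'_i with X := Y). *)
Definition Xp (F : fieldType) (n : nat) (A : 'M[F]_n) (V : lmodType F)
    (br : V -> V -> V) (X Y : 'I_n -> V) (k i : 'I_n) : V :=
  if i == k then Y k
  else if (A i k == 0) && (A k i == 0) then X i else br (X i) (X k).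

Definition hp (F : fieldType) (n : nat) (A : 'M[F]_n) (V : lmodType F)
    (br : V -> V -> V) (X Y : 'I_n -> V) (k i : 'I_n) : V :=
  br (Xp A br X Y k i) (Xp A br Y X k i).

(* Main.v *)
Require Import Defs.
Require Import Defs.
From HB Require Import structures.
From mathcomp Require Import all_boot all_order all_algebra.
Import GRing.Theory Num.Theory.
Local Open Scope ring_scope.
Set Implicit Arguments. Unset Strict Implicit. Unset Printing Implicit Defensive.

Section Lie.
Variables (F : fieldType) (V : lmodType F) (br : V -> V -> V) (par : bool -> V -> Prop).
Hypothesis HL : is_lie_superalgebra br par.

Lemma brDl a x y z : br (a *: x + y) z = a *: br x z + br y z.
Proof. by case: HL. Qed.
Lemma brDr a x y z : br z (a *: x + y) = a *: br z x + br z y.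
Proof. by case: HL => _ []. Qed.
Lemma br0l z : br 0 z = 0.
Proof.
have := brDl 1 0 0 z; rewrite !scale1r addr0 => /(congr1 (fun t => t - br 0 z)).
by rewrite subrr addrK => <-.
Qed.
Lemma br0r z : br z 0 = 0.
Proof.
have := brDr 1 0 0 z; rewrite !scale1r addr0 => /(congr1 (fun t => t - br z 0)).
by rewrite subrr addrK => <-.
Qed.
Lemma brAl x y z : br (x + y) z = br x z + br y z.
Proof. by rewrite -{1}[x]scale1r brDl scale1r. Qed.
Lemma brAr x y z : br z (x + y) = br z x + br z y.
Proof. by rewrite -{1}[x]scale1r brDr scale1r. Qed.
Lemma brZl a x z : br (a *: x) z = a *: br x z.
Proof. by rewrite -[a *: x]addr0 brDl br0l addr0. Qed.
Lemma brZr a x z : br z (a *: x) = a *: br z x.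
Proof. by rewrite -[a *: x]addr0 brDr br0r addr0. Qed.
Lemma brNl x z : br (- x) z = - br x z.
Proof. by rewrite -scaleN1r brZl scaleN1r. Qed.
Lemma brNr x z : br z (- x) = - br z x.
Proof. by rewrite -scaleN1r brZr scaleN1r. Qed.
Lemma brBl x y z : br (x - y) z = br x z - br y z.
Proof. by rewrite brAl brNl. Qed.
Lemma brBr x y z : br z (x - y) = br z x - br z y.
Proof. by rewrite brAr brNr. Qed.

Lemma par_sub b : lin_subspace (par b).
Proof. by case: HL => _ [_ []]. Qed.
Lemma par0 b : par b 0.
Proof. by case: (par_sub b). Qed.
Lemma parD b x y : par b x -> par b y -> par b (x + y).
Proof. by case: (par_sub b) => _ h px py; rewrite -[x]scale1r; apply: h. Qed.
Lemma parZ b a x : par b x -> par b (a *: x).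
Proof. by case: (par_sub b) => h0 h px; rewrite -[a *: x]addr0; apply: h. Qed.
Lemma par_decomp v : exists v0 v1, par false v0 /\ par true v1 /\ v = v0 + v1.
Proof. by case: HL => _ [_ [_ [h _]]]; apply: h. Qed.
Lemma par_br a b x y : par a x -> par b y -> par (addb a b) (br x y).
Proof. by case: HL => _ [_ [_ [_ [_ [h _]]]]]; apply: h. Qed.
Lemma antisym a b x y : par a x -> par b y ->
     br x y = - (((-1 : F) ^+ (a && b)) *: br y x).
Proof. by case: HL => _ [_ [_ [_ [_ [_ [h _]]]]]]; apply: h. Qed.
Lemma jacobi a b x y z : par a x -> par b y ->
     br x (br y z) = br (br x y) z + ((-1 : F) ^+ (a && b)) *: br y (br x z).
Proof. by case: HL => _ [_ [_ [_ [_ [_ [_ h]]]]]]; apply: h. Qed.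

Lemma lin0 (W : V -> Prop) : lin_subspace W -> W 0.
Proof. by case. Qed.
Lemma linD (W : V -> Prop) x y : lin_subspace W -> W x -> W y -> W (x + y).
Proof. by case=> _ h px py; rewrite -[x]scale1r; apply: h. Qed.
Lemma linZ (W : V -> Prop) a x : lin_subspace W -> W x -> W (a *: x).
Proof. by case=> h0 h px; rewrite -[a *: x]addr0; apply: h. Qed.

End Lie.
Section Contra.
Variables (F : numClosedFieldType) (n : nat) (A : 'M[F]_n)
    (p : 'I_n -> bool) (m : nat) (alpha : 'I_n -> 'cV[F]_m)
    (hh : 'I_n -> 'rV[F]_m) (V : lmodType F) (br : V -> V -> V)
    (par : bool -> V -> Prop) (hmap : 'rV[F]_m -> V) (X Y : 'I_n -> V).
Hypothesis H : is_contragredient A p alpha hh br par hmap X Y.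

Lemma HL : is_lie_superalgebra br par.
Proof. by case: H => _ [_ [_ [h _]]]. Qed.
Let brDl := brDl HL.
Let brDr := brDr HL.
Let br0l := br0l HL.
Let br0r := br0r HL.
Let brAl := brAl HL.
Let brAr := brAr HL.
Let brZl := brZl HL.
Let brZr := brZr HL.
Let brNl := brNl HL.
Let brNr := brNr HL.
Let brBl := brBl HL.
Let brBr := brBr HL.
Let par0 := par0 HL.
Let parD := parD HL.
Let parZ := parZ HL.
Let par_decomp := par_decomp HL.
Let par_br := par_br HL.
Let antisym := antisym HL.
Let jacobi := jacobi HL.
Lemma hmapD a u w : hmap (a *: u + w) = a *: hmap u + hmap w.
Proof. by case: H => _ [_ [_ [_ [h _]]]]; apply: h. Qed.
Lemma hmap0 : hmap 0 = 0.
Proof.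
have := hmapD 1 0 0; rewrite !scale1r addr0 => /(congr1 (fun t => t - hmap 0)).
by rewrite subrr addrK => <-.
Qed.
Lemma hmapZ a u : hmap (a *: u) = a *: hmap u.
Proof. by rewrite -[a *: u]addr0 hmapD hmap0 addr0. Qed.
Lemma par_h u : par false (hmap u).
Proof. by case: H => _ [_ [_ [_ [_ [_ [h _]]]]]]; apply: h. Qed.
Lemma br_hh u w : br (hmap u) (hmap w) = 0.
Proof. by case: H => _ [_ [_ [_ [_ [_ [_ [h _]]]]]]]; apply: h. Qed.
Lemma parX i : par (p i) (X i).
Proof. by case: H => _ [_ [_ [_ [_ [_ [_ [_ [h _]]]]]]]]; case: (h i). Qed.
Lemma parY i : par (p i) (Y i).
Proof. by case: H => _ [_ [_ [_ [_ [_ [_ [_ [h _]]]]]]]]; case: (h i). Qed.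
Lemma hX u i : br (hmap u) (X i) = ev u (alpha i) *: X i.
Proof. by case: H => _ [_ [_ [_ [_ [_ [_ [_ [_ [h _]]]]]]]]]; apply: h. Qed.
Lemma hY u i : br (hmap u) (Y i) = - (ev u (alpha i) *: Y i).
Proof. by case: H => _ [_ [_ [_ [_ [_ [_ [_ [_ [_ [h _]]]]]]]]]]; apply: h. Qed.
Lemma hXY i j : br (X i) (Y j) = if i == j then hmap (hh i) else 0.
Proof. by case: H => _ [_ [_ [_ [_ [_ [_ [_ [_ [_ [_ [h _]]]]]]]]]]]; apply: h. Qed.
Lemma gen v : generated_by br
     (fun w => (exists u, w = hmap u) \/ (exists i, w = X i) \/ (exists i, w = Y i)) v.
Proof. by case: H => _ [_ [_ [_ [_ [_ [_ [_ [_ [_ [_ [_ [h _]]]]]]]]]]]]; apply: h. Qed.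
Lemma idealH I : is_ideal br I -> (forall u, I (hmap u) -> hmap u = 0) ->
     forall v, I v -> v = 0.
Proof. by case: H => _ [_ [_ [_ [_ [_ [_ [_ [_ [_ [_ [_ [_ h]]]]]]]]]]]]; apply: h. Qed.
Lemma freeA : free [seq alpha i | i <- enum 'I_n].
Proof. by case: H => _ [h _]. Qed.
Lemma evhh i j : ev (hh i) (alpha j) = A i j.
Proof. by case: H => _ [_ [h _]]. Qed.

Lemma evD (u : 'rV[F]_m) (a : F) (c d : 'cV[F]_m) : ev u (a *: c + d) = a * ev u c + ev u d.
Proof. by rewrite /ev mulmxDr -scalemxAr !mxE. Qed.
Lemma evN (u : 'rV[F]_m) (c : 'cV[F]_m) : ev u (- c) = - ev u c.
Proof. by rewrite /ev mulmxN mxE. Qed.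

Section Kill.
Variables (E Fo : 'I_n -> V) (mu : 'I_n -> 'cV[F]_m) (h0 : 'rV[F]_m) (c0 : F).
Hypothesis genEF : forall v, generated_by br (fun w => (exists u, w = hmap u) \/
   (exists i, w = E i) \/ (exists i, w = Fo i)) v.
Hypothesis parE : forall i, par (p i) (E i).
Hypothesis parF : forall i, par (p i) (Fo i).
Hypothesis hF : forall u j, br (hmap u) (Fo j) = ev u (mu j) *: Fo j.
Hypothesis hEF : forall i j, exists c, br (E i) (Fo j) = hmap c.
Hypothesis hmu : forall j, ev h0 (mu j) = c0.
Hypothesis c0nz : c0 != 0.


Definition T w := br (hmap h0) w.

Fixpoint Pa (a N : nat) (w : V) : V :=
  if N is N'.+1 then T (Pa a N' w) - ((a + N)%:R * c0) *: Pa a N' w else w.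

Lemma TD b x y : T (b *: x + y) = b *: T x + T y.
Proof. by rewrite /T brDr. Qed.
Lemma T0 : T 0 = 0.
Proof. by rewrite /T br0r. Qed.

Lemma PaD a N b x y : Pa a N (b *: x + y) = b *: Pa a N x + Pa a N y.
Proof.
elim: N => [//|N IH] /=; rewrite IH TD.
set c := (_ * c0).
by rewrite scalerDr scalerBr !scalerA [c * b]mulrC opprD addrACA.
Qed.
Lemma Pa0 a N : Pa a N 0 = 0.
Proof. by elim: N => [//|N IH] /=; rewrite IH T0 scaler0 subrr. Qed.
Lemma PaT a N w : Pa a N (T w) = T (Pa a N w).
Proof. by elim: N => [//|N IH] /=; rewrite IH /T brBr brZr. Qed.
Lemma PaS a N w : Pa a N.+1 w = Pa a.+1 N (T w - (a.+1%:R * c0) *: w).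
Proof.
elim: N => [|N IH]; first by rewrite /= addn1.
change (T (Pa a N.+1 w) - ((a + N.+2)%:R * c0) *: Pa a N.+1 w =
  T (Pa a.+1 N (T w - (a.+1%:R * c0) *: w)) - ((a.+1 + N.+1)%:R * c0) *: Pa a.+1 N (T w - (a.+1%:R * c0) *: w)).
by rewrite IH addSnnS.
Qed.
Lemma TF j z : T (br (Fo j) z) = c0 *: br (Fo j) z + br (Fo j) (T z).
Proof.
by rewrite /T (jacobi _ (par_h h0) (parF j)) /= expr0 scale1r hF hmu brZl.
Qed.
Lemma Pa_shift a N j w : Pa a.+1 N (br (Fo j) w) = br (Fo j) (Pa a N w).
Proof.
elim: N => [//|N IH].
change (T (Pa a.+1 N (br (Fo j) w)) - ((a.+1 + N.+1)%:R * c0) *: Pa a.+1 N (br (Fo j) w)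
  = br (Fo j) (T (Pa a N w) - ((a + N.+1)%:R * c0) *: Pa a N w)).
rewrite IH TF brBr brZr addSn -natr1 mulrDl mul1r scalerDl opprD.
rewrite [c0 *: _ + _]addrC -!addrA; congr (_ + _).
by rewrite addrCA subrr addr0.
Qed.
Lemma Pa_mono a N d w : Pa a N w = 0 -> Pa a (N + d) w = 0.
Proof.
move=> h; elim: d => [|d IH]; first by rewrite addn0.
by rewrite addnS /= IH T0 scaler0 subrr.
Qed.
Lemma Pa_h a N u : exists c, c != 0 /\ Pa a N (hmap u) = c *: hmap u.
Proof.
elim: N => [|N [c [cnz IH]]]; first by exists 1; rewrite oner_neq0 scale1r.
exists (- (((a + N.+1)%:R * c0) * c)); split.
  by rewrite oppr_eq0 !mulf_neq0 // pnatr_eq0 addnS.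
rewrite /= IH /T brZr br_hh scaler0 add0r scalerA scaleNr.
by [].
Qed.

Definition J w := exists N, Pa 0 N w = 0.
Lemma linB (W : V -> Prop) x y : lin_subspace W -> W x -> W y -> W (x - y).
Proof. by move=> hW hx hy; apply: linD => //; rewrite -scaleN1r; apply: linZ. Qed.

Lemma J_lin : lin_subspace J.
Proof.
split; first by exists 0%N.
move=> b x y [Nx hx] [Ny hy]; exists (Nx + Ny)%N.
by rewrite PaD Pa_mono // addnC Pa_mono // scaler0 addr0.
Qed.
Lemma J_F j w : J w -> J (br (Fo j) w).
Proof.
case=> N hN; exists N.+1.
rewrite PaS TF mul1r [c0 *: _ + _]addrC addrK (Pa_shift 0) PaT hN T0.
exact: br0r.
Qed.

Variables (v : V) (lam : 'cV[F]_m).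
Hypothesis hv : forall u, br (hmap u) v = ev u lam *: v.
Hypothesis hlam : ev h0 lam = 2%:R * c0.
Hypothesis hEv : forall i, br (E i) v = 0.

Definition Icl w := forall W : V -> Prop, lin_subspace W -> W v ->
  (forall j x, W x -> W (br (Fo j) x)) -> W w.
Lemma Icl_lin : lin_subspace Icl.
Proof.
split; first by move=> W hW; case: hW.
move=> b x y hx hy W hW h1 h2; case: (hW) => _ hl; apply: hl.
  exact: hx. exact: hy.
Qed.
Lemma Icl_v : Icl v. Proof. by move=> W. Qed.
Lemma Icl_F j w : Icl w -> Icl (br (Fo j) w).
Proof. by move=> hw W hW h1 h2; apply: (h2); apply: (hw W). Qed.
Lemma Icl_J w : Icl w -> J w.
Proof.
move=> hw; apply: hw; [exact: J_lin | | exact: J_F].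
exists 2%N.
have h1 : Pa 0 1 v = c0 *: v.
  by rewrite /= /T hv hlam -scalerBl mulr2n mulrDl mul1r addrK.
change (T (Pa 0 1 v) - ((0 + 2)%:R * c0) *: Pa 0 1 v = 0).
by rewrite h1 /T brZr hv hlam add0n !scalerA mulrC subrr.
Qed.
Lemma Icl_h u w : Icl w -> Icl (br (hmap u) w).
Proof.
move=> hw; have : Icl w /\ Icl (br (hmap u) w); last by case.
apply: (hw (fun x => Icl x /\ Icl (br (hmap u) x))).
- split; first by split; [exact: (lin0 Icl_lin) | rewrite br0r; exact: (lin0 Icl_lin)].
  move=> b x y [hx1 hx2] [hy1 hy2]; split; first by case: Icl_lin => _; apply.
  rewrite brDr; case: Icl_lin => _; apply => //.
- by split; [exact: Icl_v | rewrite hv; apply: linZ Icl_lin Icl_v].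
- move=> j x [hx1 hx2]; split; first exact: Icl_F.
  rewrite (jacobi _ (par_h u) (parF j)) /= expr0 scale1r hF brZl.
  by apply: linD Icl_lin _ _; [apply: linZ Icl_lin _; exact: Icl_F | exact: Icl_F].
Qed.
Lemma Icl_E i w : Icl w -> Icl (br (E i) w).
Proof.
move=> hw; have : Icl w /\ Icl (br (E i) w); last by case.
apply: (hw (fun x => Icl x /\ Icl (br (E i) x))).
- split; first by split; [exact: (lin0 Icl_lin) | rewrite br0r; exact: (lin0 Icl_lin)].
  move=> b x y [hx1 hx2] [hy1 hy2]; split; first by case: Icl_lin => _; apply.
  rewrite brDr; case: Icl_lin => _; apply => //.
- by split; [exact: Icl_v | rewrite hEv; exact: (lin0 Icl_lin)].
- move=> j x [hx1 hx2]; split; first exact: Icl_F.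
  rewrite (jacobi _ (parE i) (parF j)); case: (hEF i j) => c ->.
  by apply: linD Icl_lin _ _; [exact: Icl_h | apply: linZ Icl_lin _; exact: Icl_F].
Qed.

Definition S x := forall w, Icl w -> Icl (br x w).
Lemma S_lin : lin_subspace S.
Proof.
split; first by move=> w _; rewrite br0l; exact: (lin0 Icl_lin).
move=> b x y hx hy w hw; rewrite brDl.
by apply: linD Icl_lin _ _; [apply: linZ Icl_lin _; exact: hx | exact: hy].
Qed.
Lemma S_br a b x y : par a x -> par b y -> S x -> S y -> S (br x y).
Proof.
move=> pa pb hx hy w hw.
have -> : br (br x y) w = br x (br y w) - ((-1 : F) ^+ (a && b)) *: br y (br x w).
  by rewrite (jacobi _ pa pb) addrK.
apply: linB Icl_lin _ _; first by apply: hx; apply: hy.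
by apply: linZ Icl_lin _; apply: hy; apply: hx.
Qed.
Definition S2 x := exists x0 x1, par false x0 /\ par true x1 /\ x = x0 + x1 /\ S x0 /\ S x1.
Lemma S2_lin : lin_subspace S2.
Proof.
split.
  exists 0, 0; split; first exact: par0. split; first exact: par0.
  by rewrite addr0; split => //; split; apply: (lin0 S_lin).
move=> b x y [x0 [x1 [p0 [p1 [-> [s0 s1]]]]]] [y0 [y1 [q0 [q1 [-> [t0 t1]]]]]].
exists (b *: x0 + y0), (b *: x1 + y1); split; first by apply: parD => //; apply: parZ.
split; first by apply: parD => //; apply: parZ.
split; first by rewrite scalerDr addrACA.
by split; case: S_lin => _; apply.
Qed.
Lemma S2_br x y : S2 x -> S2 y -> S2 (br x y).
Proof.
move=> [x0 [x1 [p0 [p1 [-> [s0 s1]]]]]] [y0 [y1 [q0 [q1 [-> [t0 t1]]]]]].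
exists (br x0 y0 + br x1 y1), (br x0 y1 + br x1 y0).
split; first by apply: parD; [exact: (par_br p0 q0) | exact: (par_br p1 q1)].
split; first by apply: parD; [exact: (par_br p0 q1) | exact: (par_br p1 q0)].
split; first by rewrite brAl !brAr [br x1 y0 + _]addrC addrACA.
split; apply: linD S_lin _ _; apply: S_br; eassumption.
Qed.
Lemma S2_hom b x : par b x -> S x -> S2 x.
Proof.
move=> pb sx; case: b pb => pb.
  exists 0, x; split; first exact: par0. split => //. rewrite add0r; split => //.
  by split => //; apply: (lin0 S_lin).
exists x, 0; split => //. split; first exact: par0. rewrite addr0; split => //.
by split => //; apply: (lin0 S_lin).
Qed.
Lemma S_all x : S x.
Proof.
have : S2 x.
  apply: genEF; [exact: S2_lin | exact: S2_br |].
  move=> s [[u ->]|[[i ->]|[i ->]]].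
  - by apply: (S2_hom (par_h u)) => w; apply: Icl_h.
  - by apply: (S2_hom (parE i)) => w; apply: Icl_E.
  - by apply: (S2_hom (parF i)) => w; apply: Icl_F.
move=> [x0 [x1 [_ [_ [-> [s0 s1]]]]]] w hw; rewrite brAl.
by apply: linD Icl_lin _ _; [exact: s0 | exact: s1].
Qed.

Lemma kill : v = 0.
Proof.
apply: (idealH (I := Icl)) Icl_v; first by split; [exact: Icl_lin | move=> x w; exact: S_all].
move=> u /Icl_J [N hN]; case: (Pa_h 0 N u) => c [cnz hc].
by move: hN; rewrite hc => /eqP; rewrite scaler_eq0 (negbTE cnz) => /eqP.
Qed.
End Kill.

Lemma exists_h0 : exists h0, forall i, ev h0 (alpha i) = 1.
Proof.
case: (linear_of_free [seq alpha i | i <- enum 'I_n] [seq (1 : F^o) | i <- enum 'I_n]) => f hf.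
have {}hf := hf freeA; rewrite !size_map in hf; have {}hf := hf erefl.
rewrite -map_comp in hf; have hf1 : forall i, f (alpha i) = 1.
  by move=> i; move/eq_in_map: hf => /(_ i); rewrite mem_enum; apply.
exists (\row_r f (delta_mx r 0)) => i; rewrite -(hf1 i) /ev.
rewrite [in RHS](matrix_sum_delta (alpha i)) linear_sum mxE.
apply: eq_bigr => r _; rewrite big_ord1 linearZ /= mxE ord1 mulrC.
by [].
Qed.

Lemma evA (u : 'rV[F]_m) (c d : 'cV[F]_m) : ev u (c + d) = ev u c + ev u d.
Proof. by rewrite /ev mulmxDr mxE. Qed.

Lemma br_xh b x u : par b x -> br x (hmap u) = - br (hmap u) x.
Proof. by move=> pb; rewrite (antisym pb (par_h u)) andbF expr0 scale1r. Qed.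

Lemma YX i j : br (Y i) (X j) = if j == i then hmap (- ((-1 : F) ^+ (p i && p j)) *: hh j) else 0.
Proof.
rewrite (antisym (parY i) (parX j)) hXY; case: eqP => _; last by rewrite scaler0 oppr0.
by rewrite hmapZ scaleNr.
Qed.

Lemma genYX v : generated_by br
     (fun w => (exists u, w = hmap u) \/ (exists i, w = Y i) \/ (exists i, w = X i)) v.
Proof.
move=> W hW hbr hgen; apply: (gen v hW hbr) => s hs; apply: hgen; tauto.
Qed.

Lemma hk_Y k u : ev u (alpha k) = 0 -> br (hmap u) (Y k) = 0.
Proof. by move=> h; rewrite hY h scale0r oppr0. Qed.
Lemma hk_X k u : ev u (alpha k) = 0 -> br (hmap u) (X k) = 0.
Proof. by move=> h; rewrite hX h scale0r. Qed.

Section Vanish.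
Variable h0 : 'rV[F]_m.
Hypothesis hh0 : forall i, ev h0 (alpha i) = 1.

Lemma hFY u j : br (hmap u) (Y j) = ev u (- alpha j) *: Y j.
Proof. by rewrite hY evN scaleNr. Qed.
Lemma hEFY i j : exists c, br (X i) (Y j) = hmap c.
Proof. by exists (if i == j then hh i else 0); rewrite hXY; case: (i == j); rewrite ?hmap0. Qed.
Lemma hmuY j : ev h0 (- alpha j) = -1.
Proof. by rewrite evN hh0. Qed.
Lemma hEFX i j : exists c, br (Y i) (X j) = hmap c.
Proof.
exists (if j == i then - ((-1 : F) ^+ (p i && p j)) *: hh j else 0).
by rewrite YX; case: (j == i); rewrite ?hmap0.
Qed.
Lemma m1nz : (-1 : F) != 0. Proof. by rewrite oppr_eq0 oner_neq0. Qed.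

Let killY := @kill X Y (fun j => - alpha j) h0 (-1) gen parX parY hFY hEFY hmuY m1nz.
Let killX := @kill Y X alpha h0 1 genYX parY parX hX hEFX hh0 (oner_neq0 _).

Lemma YkYk k : A k k = 0 -> br (Y k) (Y k) = 0.
Proof.
move=> Akk; apply: (@killY _ (- (alpha k + alpha k))).
- move=> u; rewrite (jacobi _ (par_h u) (parY k)) /= expr0 scale1r hY brNl brZl brNr brZr.
  by rewrite evN evA scaleNr scalerDl opprD.
- by rewrite evN evA hh0 mulrN1 mulr2n.
- move=> i; rewrite (jacobi _ (parX i) (parY k)) hXY; case: eqP => [->|_].
    by rewrite (br_xh _ (parY k)) !hk_Y ?evhh // oppr0 scaler0 addr0.
  by rewrite br0l br0r scaler0 addr0.
Qed.

Lemma YjYk j k : j != k -> A j k = 0 -> A k j = 0 -> br (Y j) (Y k) = 0.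
Proof.
move=> njk Ajk Akj; apply: (@killY _ (- (alpha j + alpha k))).
- move=> u; rewrite (jacobi _ (par_h u) (parY j)) /= expr0 scale1r !hY brNl brZl brNr brZr.
  by rewrite evN evA scaleNr scalerDl opprD.
- by rewrite evN evA !hh0 mulrN1 mulr2n.
- move=> i; rewrite (jacobi _ (parX i) (parY j)) !hXY.
  case: (eqVneq i j) => [->|nij].
    by rewrite (negbTE njk) br0r scaler0 addr0 hk_Y ?evhh.
  case: (eqVneq i k) => [->|nik].
    by rewrite br0l add0r (br_xh _ (parY j)) hk_Y ?evhh // oppr0 scaler0.
  by rewrite br0l br0r scaler0 addr0.
Qed.

Lemma XkXk k : A k k = 0 -> br (X k) (X k) = 0.
Proof.
move=> Akk; apply: (@killX _ (alpha k + alpha k)).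
- move=> u; rewrite (jacobi _ (par_h u) (parX k)) /= expr0 scale1r hX brZl brZr.
  by rewrite evA scalerDl.
- by rewrite evA hh0 mulr1 mulr2n.
- move=> i; rewrite (jacobi _ (parY i) (parX k)) YX; case: eqP => [<-|_].
    by rewrite (br_xh _ (parX k)) hmapZ brZl hk_X ?evhh // !(scaler0, oppr0, addr0).
  by rewrite br0l br0r scaler0 addr0.
Qed.

Lemma XjXk j k : j != k -> A j k = 0 -> A k j = 0 -> br (X j) (X k) = 0.
Proof.
move=> njk Ajk Akj; apply: (@killX _ (alpha j + alpha k)).
- move=> u; rewrite (jacobi _ (par_h u) (parX j)) /= expr0 scale1r !hX brZl brZr.
  by rewrite evA scalerDl.
- by rewrite evA !hh0 mulr1 mulr2n.
- move=> i; rewrite (jacobi _ (parY i) (parX j)) !YX.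
  case: (eqVneq j i) => [<-|nij].
    by rewrite eq_sym (negbTE njk) br0r scaler0 addr0 hmapZ brZl hk_X ?evhh ?scaler0.
  case: (eqVneq k i) => [<-|nik].
    by rewrite br0l add0r (br_xh _ (parX j)) hmapZ brZl hk_X ?evhh // scaler0 oppr0 scaler0.
  by rewrite br0l br0r scaler0 addr0.
Qed.
End Vanish.
Lemma YkYk' k : A k k = 0 -> br (Y k) (Y k) = 0.
Proof. by case: exists_h0 => h0 hh0; apply: YkYk hh0 k. Qed.
Lemma XkXk' k : A k k = 0 -> br (X k) (X k) = 0.
Proof. by case: exists_h0 => h0 hh0; apply: XkXk hh0 k. Qed.
Lemma YjYk' j k : j != k -> A j k = 0 -> A k j = 0 -> br (Y j) (Y k) = 0.
Proof. by case: exists_h0 => h0 hh0; apply: (@YjYk h0 hh0 j k). Qed.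
Lemma XjXk' j k : j != k -> A j k = 0 -> A k j = 0 -> br (X j) (X k) = 0.
Proof. by case: exists_h0 => h0 hh0; apply: (@XjXk h0 hh0 j k). Qed.

Lemma eq_opp0 (Z : V) : Z = - Z -> Z = 0.
Proof.
move=> h; have : Z + Z = 0 by rewrite {1}h addNr.
rewrite -mulr2n -scaler_nat => /eqP; rewrite scaler_eq0 pnatr_eq0 /=.
by move/eqP.
Qed.

Section Main.
Variable k : 'I_n.
Hypothesis Akk : A k k = 0.
Hypothesis pk : p k = true.

Lemma part2 u i : br (hmap u) (Xp A br X Y k i) = ev u (rk A alpha k i) *: Xp A br X Y k i.
Proof.
rewrite /Xp /rk; case: (eqVneq i k) => [_|nik]; first by rewrite hY evN scaleNr.
case: ifP => _; first exact: hX.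
rewrite (jacobi _ (par_h u) (parX i)) /= expr0 scale1r !hX brZl brZr.
by rewrite evA scalerDl.
Qed.

Lemma part3 u i : br (hmap u) (Xp A br Y X k i) = - (ev u (rk A alpha k i) *: Xp A br Y X k i).
Proof.
rewrite /Xp /rk; case: (eqVneq i k) => [_|nik]; first by rewrite hX evN scaleNr opprK.
case: ifP => _; first exact: hY.
rewrite (jacobi _ (par_h u) (parY i)) /= expr0 scale1r !hY brNl brNr brZl brZr.
by rewrite evA scalerDl opprD.
Qed.

Lemma WYj i j : i != j -> k != j -> br (br (X i) (X k)) (Y j) = 0.
Proof.
move=> nij nkj; have := jacobi (Y j) (parX i) (parX k).
by rewrite !hXY (negbTE nij) (negbTE nkj) !br0r scaler0 addr0 => <-.
Qed.

Lemma WYk i : i != k -> br (br (X i) (X k)) (Y k) = - (A k i *: X i).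
Proof.
move=> nik; have := jacobi (Y k) (parX i) (parX k).
rewrite !hXY eqxx (negbTE nik) br0r scaler0 addr0 => <-.
by rewrite (br_xh _ (parX i)) hX evhh.
Qed.

Lemma YkYjYk j : j != k -> br (Y k) (br (Y j) (Y k)) = 0.
Proof.
move=> njk; apply: eq_opp0.
rewrite [LHS](jacobi _ (parY k) (parY j)) YkYk' // br0r scaler0 addr0.
rewrite (antisym (parY k) (parY j)) brNl brZl.
rewrite (antisym (par_br (parY j) (parY k)) (parY k)) pk.
by case: (p j) => /=; rewrite ?expr1 ?expr0 ?scale1r ?scaleN1r ?opprK.
Qed.

Lemma XiXkXk i : br (br (X i) (X k)) (X k) = 0.
Proof.
have := jacobi (X k) (parX i) (parX k); rewrite XkXk' // br0r.
rewrite (antisym (parX k) (par_br (parX i) (parX k))) pk.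
case: (p i) => /=; rewrite ?expr1 ?expr0 ?scale1r ?scaleN1r ?opprK ?andbT => h.
  by apply: eq_opp0; apply/eqP; rewrite -subr_eq0 opprK h.
by apply: eq_opp0; apply/eqP; rewrite -subr_eq0 opprK h.
Qed.

Lemma part4 i j : br (Xp A br X Y k i) (Xp A br Y X k j) = if i == j then hp A br X Y k i else 0.
Proof.
case: (eqVneq i j) => [<-|nij]; first by [].
rewrite /Xp.
case: (eqVneq i k) => [eik|nik]; case: (eqVneq j k) => [ejk|njk].
- by move: nij; rewrite eik ejk eqxx.
- case: ifP => [/andP [/eqP a1 /eqP a2]|_]; last exact: YkYjYk njk.
  by rewrite (antisym (parY k) (parY j)) YjYk' // scaler0 oppr0.
- by case: ifP => [/andP [/eqP a1 /eqP a2]|_]; [exact: XjXk' | exact: XiXkXk].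
- have nkj : k != j by rewrite eq_sym.
  case: ifP => [/andP [/eqP a1 /eqP a2]|ti]; case: ifP => [/andP [/eqP b1 /eqP b2]|tj].
  + by rewrite hXY (negbTE nij).
  + by rewrite (jacobi _ (parX i) (parY j)) !hXY (negbTE nij) (negbTE nik) br0l br0r scaler0 addr0.
  + exact: WYj.
  + rewrite (jacobi _ (par_br (parX i) (parX k)) (parY j)) WYj // br0l add0r WYk //.
    by rewrite brNr brZr YX (negbTE nij) scaler0 oppr0 scaler0.
Qed.

Lemma WYk' i : i != k -> br (br (Y i) (Y k)) (X k) = A k i *: Y i.
Proof.
move=> nik; have := jacobi (X k) (parY i) (parY k).
rewrite (YX i k) (YX k k) eqxx (eq_sym k i) (negbTE nik) pk /= expr1 opprK scale1r.
rewrite br0r scaler0 addr0 => <-.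
by rewrite (br_xh _ (parY i)) hY evhh opprK.
Qed.

Lemma part5 : (forall j, j != k -> A k j = 0 -> A j k = 0) ->
   forall v, generated_by br
     (fun w => (exists u, w = hmap u) \/ (exists i, w = Xp A br X Y k i) \/
        (exists i, w = Xp A br Y X k i)) v.
Proof.
move=> reg v W hW hbr hgen; apply: (gen v hW hbr) => s [[u ->]|[[i ->]|[i ->]]].
- by apply: hgen; left; exists u.
- case: (eqVneq i k) => [->|nik].
    by apply: hgen; right; right; exists k; rewrite /Xp eqxx.
  case triv: ((A i k == 0) && (A k i == 0)).
    by apply: hgen; right; left; exists i; rewrite /Xp (negbTE nik) triv.
  have aki : A k i != 0.
    apply/eqP => aki; move: triv; rewrite aki eqxx reg ?eqxx //.
  have e : X i = (- (A k i)^-1) *: br (Xp A br X Y k i) (Xp A br X Y k k).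
    rewrite /Xp eqxx (negbTE nik) triv WYk // scalerN scaleNr opprK scalerA.
    by rewrite mulVf // scale1r.
  rewrite e; apply: linZ hW _; apply: hbr; apply: hgen; right; left; by eexists.
- case: (eqVneq i k) => [->|nik].
    by apply: hgen; right; left; exists k; rewrite /Xp eqxx.
  case triv: ((A i k == 0) && (A k i == 0)).
    by apply: hgen; right; right; exists i; rewrite /Xp (negbTE nik) triv.
  have aki : A k i != 0.
    apply/eqP => aki; move: triv; rewrite aki eqxx reg ?eqxx //.
  have e : Y i = (A k i)^-1 *: br (Xp A br Y X k i) (Xp A br Y X k k).
    rewrite /Xp eqxx (negbTE nik) triv WYk' // scalerA.
    by rewrite mulVf // scale1r.
  rewrite e; apply: linZ hW _; apply: hbr; apply: hgen; right; right; by eexists.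
Qed.

Lemma seq_tuple (f : 'I_n -> 'cV[F]_m) : [seq f i | i <- enum 'I_n] = [tuple f i | i < n] :> seq _.
Proof. by rewrite /mktuple /map_tuple /=. Qed.

Lemma part1 : free [seq rk A alpha k i | i <- enum 'I_n].
Proof.
have hA : forall c : 'I_n -> F, \sum_i c i *: alpha i = 0 -> forall i, c i = 0.
  move=> c hc; have := freeA; rewrite seq_tuple => /freeP; apply.
  by apply: etrans hc; apply: eq_bigr => i _; rewrite nth_mktuple.
rewrite seq_tuple; apply/freeP => c hc.
have {}hc : \sum_i c i *: rk A alpha k i = 0.
  by apply: etrans hc; apply: eq_bigr => i _; rewrite nth_mktuple.
pose g i := if (A i k == 0) && (A k i == 0) then 0 else c i.
pose d i := if i == k then - c k + \sum_(l < n | l != k) g l else c i.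
have hd : forall i, d i = 0.
  apply: hA; apply: etrans hc; rewrite (bigD1 k) //= [in RHS](bigD1 k) //= /d eqxx /rk eqxx.
  rewrite scalerDl scalerN -scaleNr -addrA; apply/eqP; rewrite (inj_eq (addrI _)); apply/eqP.
  rewrite scaler_suml addrC -big_split /=.
  apply: eq_bigr => i nik; rewrite (negbTE nik) /g.
  by case: ifP => _; rewrite ?scale0r ?addr0 // scalerDr.
have hi : forall i, i != k -> c i = 0.
  by move=> i nik; have := hd i; rewrite /d (negbTE nik).
move=> i; case: (eqVneq i k) => [->|nik]; last exact: hi.
have := hd k; rewrite /d eqxx big1 ?addr0; first by move/eqP; rewrite oppr_eq0 => /eqP.
by move=> l lk; rewrite /g hi //; case: ifP.
Qed.
End Main. End Contra.

Unset Implicit Arguments.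

Theorem lemma4p1 (F : numClosedFieldType) (n : nat) (A : 'M[F]_n)
    (p : 'I_n -> bool) (m : nat) (alpha : 'I_n -> 'cV[F]_m)
    (hh : 'I_n -> 'rV[F]_m) (V : lmodType F) (br : V -> V -> V)
    (par : bool -> V -> Prop) (hmap : 'rV[F]_m -> V) (X Y : 'I_n -> V)
    (k : 'I_n) :
  is_contragredient A p alpha hh br par hmap X Y ->
  A k k = 0 -> p k = true ->
  let X' := Xp A br X Y k in
  let Y' := Xp A br Y X k in
  let h' := hp A br X Y k in
  free [seq rk A alpha k i | i <- enum 'I_n] /\
  (forall u i, br (hmap u) (X' i) = ev u (rk A alpha k i) *: X' i) /\
  (forall u i, br (hmap u) (Y' i) = - (ev u (rk A alpha k i) *: Y' i)) /\
  (forall i j, br (X' i) (Y' j) = if i == j then h' i else 0) /\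
  ((forall j, j != k -> A k j = 0 -> A j k = 0) ->
   forall v, generated_by br
     (fun w => (exists u, w = hmap u) \/ (exists i, w = X' i) \/ (exists i, w = Y' i)) v).
Proof.
move=> HC Akk pk X' Y' h'.
split; first exact: (part1 HC).
split; first by move=> u i; apply: (part2 HC).
split; first by move=> u i; apply: (part3 HC).
split; first by move=> i j; apply: (part4 HC).
by move=> reg v; apply: (part5 HC).
Qed.
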